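(* Let $G$ be a small category and $X$ a set with a partial category action by $G$, and let $Y = \overline{X}/\simeq$ as defined below. For $g\in{\rm mor}(G)$ and $(h,x)\in\overline{X}$, declare $g\cdot[h,x]$ defined if and only if there is $(h',x')\in\overline{X}$ with $(h,x)\simeq(h',x')$ and $(g,h')\in G^2$, and in that case put $g\cdot[h,x] = [gh',x']$. Then this is a well-defined global category action by $G$ on $Y$.
   Context: Conventions: $G$ is a small category; objects are identified with their identity morphisms, so ${\rm ob}(G)\subseteq{\rm mor}(G)$; $d(g), c(g)$ are domain and codomain, $G^2=\{(g,h)\mid d(g)=c(h)\}$. A partial category action by $G$ on $X$ is a partial function ${\rm mor}(G)\times X\to X$, $(g,x)\mapsto g\cdot x$ where defined, such that: (C1) for every $x$ there is $e\in{\rm ob}(G)$ with $e\cdot x$ defined, and whenever $f\in{\rm ob}(G)$ and $f\cdot x$ is defined, $f\cdot x=x$; (C2) if $g\cdot x$ is defined then $d(g)\cdot x$ is defined; (C3) if $(g,h)\in G^2$ and $h\cdot x$ is defined, then $(gh)\cdot x$ is defined iff $g\cdot(h\cdot x)$ is defined, and then they are equal. It is global if (C4): whenever $d(g)\cdot x$ is defined, $g\cdot x$ is defined. Let $\overline{X} = \{(g,x)\in{\rm mor}(G)\times X\mid d(g)\cdot x\text{ defined}\}$. Define $(g,x)\sim(g',x')$ on $\overline{X}$ if either (i) there is $h\in{\rm mor}(G)$ with $(g',h)\in G^2$, $h\cdot x$ defined, $g=g'h$ and $x'=h\cdot x$; or (ii) $x=x'$, $g,g'\in{\rm ob}(G)$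 and both $g\cdot x$ and $g'\cdot x'$ are defined. Let $\simeq$ be the equivalence relation generated by $\sim$, $Y=\overline{X}/\simeq$, and $[g,x]$ the class of $(g,x)$. *)

(* Defs.v *)
From Stdlib Require Import Relations.

Set Implicit Arguments.

(* A small category, given by its set of morphisms; objects are identified
   with their identity morphisms via the predicate [ob]. Composition [comp g h]
   (= gh, first h then g) is a total function but only meaningful when
   [dom g = cod h]. *)
Record category := Category {
  mor : Type;
  ob : mor -> Prop;
  dom : mor -> mor;
  cod : mor -> mor;
  comp : mor -> mor -> mor;
  dom_ob : forall g, ob (dom g);
  cod_ob : forall g, ob (cod g);
  ob_dom : forall e, ob e -> dom e = e;
  ob_cod : forall e, ob e -> cod e = e;
  comp_dom : forall g h, dom g = cod h -> dom (comp g h) = dom h;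
  comp_cod : forall g h, dom g = cod h -> cod (comp g h) = cod g;
  comp_id_r : forall g, comp g (dom g) = g;
  comp_id_l : forall g, comp (cod g) g = g;
  comp_assoc : forall f g h, dom f = cod g -> dom g = cod h ->
    comp f (comp g h) = comp (comp f g) h
}.

Section Actions.
Variable G : category.

Definition composable (g h : mor G) : Prop := dom G g = cod G h.

(* A partial map mor(G) x X -> X is represented by its graph
   [act g x y] meaning "g . x is defined and equals y". *)
Definition pdefined (X : Type) (act : mor G -> X -> X -> Prop) g x : Prop :=
  exists y, act g x y.

Definition partial_category_action (X : Type) (act : mor G -> X -> X -> Prop) : Prop :=
  (forall g x y z, act g x y -> act g x z -> y = z) /\
  (forall x, exists e, ob G e /\ pdefined act e x) /\
  (forall f x y, ob G f -> act f x y -> y = x) /\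
  (forall g x, pdefined act g x -> pdefined act (dom G g) x) /\
  (forall g h x y, composable g h -> act h x y ->
     (pdefined act (comp G g h) x <-> pdefined act g y) /\
     (forall z w, act (comp G g h) x z -> act g y w -> z = w)).

Definition global_category_action (X : Type) (act : mor G -> X -> X -> Prop) : Prop :=
  partial_category_action act /\
  (forall g x, pdefined act (dom G g) x -> pdefined act g x).

Variable X : Type.
Variable act : mor G -> X -> X -> Prop.

Definition Xbar (p : mor G * X) : Prop := pdefined act (dom G (fst p)) (snd p).

Definition sim (p q : mor G * X) : Prop :=
  (exists h, composable (fst q) h /\ act h (snd p) (snd q) /\ fst p = comp G (fst q) h)
  \/ (snd p = snd q /\ ob G (fst p) /\ ob G (fst q) /\
      pdefined act (fst p) (snd p) /\ pdefined act (fst q) (snd q)).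

Definition simeq (p q : mor G * X) : Prop :=
  Xbar p /\ Xbar q /\
  clos_refl_sym_trans _ (fun a b => Xbar a /\ Xbar b /\ sim a b) p q.

(* Y = \overline{X} / \simeq, as the type of equivalence classes *)
Definition Yq : Type :=
  { P : mor G * X -> Prop | exists p, Xbar p /\ P = simeq p }.

(* [h,x] as a predicate; y contains (h,x) iff proj1_sig y (h,x) *)
Definition Yact (g : mor G) (y y' : Yq) : Prop :=
  exists h' x', proj1_sig y (h', x') /\ composable g h' /\
                proj1_sig y' = simeq (comp G g h', x').

End Actions.

(* Main.v *)
Require Import Defs.
From Stdlib Require Import Relations.
From Stdlib Require Import Classical FunctionalExtensionality PropExtensionality ProofIrrelevance.
Set Implicit Arguments.

Definition Rst (G : category) (X : Type) (act : mor G -> X -> X -> Prop) :=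
  clos_refl_sym_trans _ (fun a b => Xbar G act a /\ Xbar G act b /\ sim G act a b).

Definition PhiR (G : category) (X : Type) (act : mor G -> X -> X -> Prop) g (p r : mor G * X) : Prop :=
 (cod G (fst p) = dom G g /\ r = (comp G g (fst p), snd p)) \/
 (cod G (fst p) <> dom G g /\ exists z, act (fst p) (snd p) z /\ pdefined G act (dom G g) z /\ r = (g, z)).

Definition Inv (G : category) (X : Type) (act : mor G -> X -> X -> Prop) (g : mor G) (p q : mor G * X) :=
  (forall r, PhiR G act g p r -> exists s, PhiR G act g q s /\ Rst G act r s) /\
  (forall s, PhiR G act g q s -> exists r, PhiR G act g p r /\ Rst G act r s).

Lemma Inv_refl G X (act : mor G -> X -> X -> Prop) g p : Inv G act g p p.
Proof. split; intros r H; exists r; split; auto; apply rst_refl. Qed.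

Lemma Inv_sym G X (act : mor G -> X -> X -> Prop) g p q : Inv G act g p q -> Inv G act g q p.
Proof.
  intros [H1 H2]; split.
  - intros r Hr; destruct (H2 r Hr) as [s [Hs Hrs]]; exists s; split; auto; apply rst_sym; auto.
  - intros s Hs; destruct (H1 s Hs) as [r [Hr Hrs]]; exists r; split; auto; apply rst_sym; auto.
Qed.

Lemma Inv_trans G X (act : mor G -> X -> X -> Prop) g p q u :
  Inv G act g p q -> Inv G act g q u -> Inv G act g p u.
Proof.
  intros [H1 H2] [K1 K2]; split.
  - intros r Hr; destruct (H1 r Hr) as [s [Hs Hrs]]; destruct (K1 s Hs) as [t [Ht Hst]].
    exists t; split; auto; eapply rst_trans; eauto.
  - intros t Ht; destruct (K2 t Ht) as [s [Hs Hst]]; destruct (H2 s Hs) as [r [Hr Hrs]].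
    exists r; split; auto; eapply rst_trans; eauto.
Qed.

Lemma Inv_step G X (act : mor G -> X -> X -> Prop) g p q :
  partial_category_action G act -> Xbar G act p -> Xbar G act q -> sim G act p q ->
  Inv G act g p q.
Proof.
  intros [Hfun [HC1 [Hob [HC2 HC3]]]] Hp Hq Hs.
  destruct p as [hp xp], q as [hq xq]; unfold Xbar in *; simpl in *.
  destruct Hs as [[h [Hc [Ha Heq]]]|[Hx [Obp [Obq [Dp Dq]]]]]; simpl in *.
  - subst hp. unfold composable in Hc.
    assert (Hcod : cod G (comp G hq h) = cod G hq) by (apply comp_cod; auto).
    destruct (classic (cod G hq = dom G g)) as [Hg|Hg].
    + assert (Rrs : Rst G act (comp G g (comp G hq h), xp) (comp G g hq, xq)).
      { apply rst_step. unfold Xbar; simpl. split; [|split].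
        - rewrite comp_dom by congruence. rewrite comp_dom by auto.
          apply (HC2 h xp); exists xq; auto.
        - rewrite comp_dom by auto. auto.
        - left. exists h; simpl. split; [|split]; auto.
          + unfold composable. rewrite comp_dom by auto. auto.
          + apply comp_assoc; auto. }
      split.
      * intros r [[_ ->]|[Hn _]]; [|exfalso; simpl in Hn; congruence].
        exists (comp G g hq, xq); split; auto. left; simpl; auto.
      * intros s [[_ ->]|[Hn _]]; [|exfalso; simpl in Hn; congruence].
        exists (comp G g (comp G hq h), xp); split; auto. left; simpl; split; congruence.
    + destruct (HC3 hq h xp xq Hc Ha) as [Hiff Hval].
      split.
      * intros r [[Hn _]|[_ [z [Hz [Hd ->]]]]]; [exfalso; simpl in Hn; congruence|].
        simpl in Hz. destruct (proj1 Hiff (ex_intro _ z Hz)) as [w Hw].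
        pose proof (Hval _ _ Hz Hw); subst w.
        exists (g, z); split; [|apply rst_refl]. right; simpl; split; auto.
        exists z; auto.
      * intros s [[Hn _]|[_ [w [Hw [Hd ->]]]]]; [exfalso; simpl in Hn; congruence|].
        simpl in Hw. destruct (proj2 Hiff (ex_intro _ w Hw)) as [z Hz].
        pose proof (Hval _ _ Hz Hw); subst w.
        exists (g, z); split; [|apply rst_refl]. right; simpl; split; [congruence|].
        exists z; auto.
  - subst xq.
    assert (Key : forall f, ob G f -> pdefined G act f xp ->
               forall r, PhiR G act g (f, xp) r -> r = (g, xp)).
    { intros f Of Df r [[Hc ->]|[Hc [z [Hz [_ ->]]]]]; simpl in *.
      - rewrite ob_cod in Hc by auto. subst f. rewrite comp_id_r. auto.
      - rewrite (Hob f xp z Of Hz). auto. }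
    assert (Ex : forall f, ob G f -> pdefined G act f xp ->
               (ob G (dom G g) -> f = dom G g \/ pdefined G act (dom G g) xp) ->
               PhiR G act g (f, xp) (g, xp)).
    { intros f Of Df Hd. destruct (classic (cod G f = dom G g)) as [Hc|Hc].
      - left; simpl; split; auto. rewrite ob_cod in Hc by auto. subst f. rewrite comp_id_r; auto.
      - right; simpl; split; auto. destruct Df as [z Hz].
        pose proof (Hob f xp z Of Hz); subst z. exists xp; split; auto. split; auto.
        destruct (Hd (dom_ob G g)) as [E|E]; auto. exfalso; apply Hc. subst f.
        apply ob_cod, dom_ob. }
    assert (Dg : forall f, ob G f -> pdefined G act f xp ->
               forall r, PhiR G act g (f, xp) r -> f = dom G g \/ pdefined G act (dom G g) xp).
    { intros f Of Df r [[Hc _]|[_ [z [Hz [Hd _]]]]]; simpl in *.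
      - left. rewrite ob_cod in Hc by auto. auto.
      - right. rewrite (Hob f xp z Of Hz) in Hd. auto. }
    split.
    + intros r Hr. pose proof (Key hp Obp Dp r Hr) as ->. exists (g, xp); split; [|apply rst_refl].
      apply Ex; auto. intros _. destruct (Dg hp Obp Dp _ Hr) as [E|E]; auto.
      right; subst; auto.
    + intros s Hs. pose proof (Key hq Obq Dq s Hs) as ->. exists (g, xp); split; [|apply rst_refl].
      apply Ex; auto. intros _. destruct (Dg hq Obq Dq _ Hs) as [E|E]; auto.
      right; subst; auto.
Qed.

Lemma Inv_rst G X (act : mor G -> X -> X -> Prop) g p q :
  partial_category_action G act -> Rst G act p q -> Inv G act g p q.
Proof.
  intros Hpa H; induction H.
  - destruct H as [Ha [Hb Hs]]; apply Inv_step; auto.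
  - apply Inv_refl.
  - apply Inv_sym; auto.
  - eapply Inv_trans; eauto.
Qed.

Lemma welldef G X (act : mor G -> X -> X -> Prop) g h1 x1 h2 x2 :
  partial_category_action G act ->
  simeq G act (h1, x1) (h2, x2) -> composable G g h1 -> composable G g h2 ->
  simeq G act (comp G g h1, x1) (comp G g h2, x2).
Proof.
  intros Hpa [X1 [X2 R]] C1 C2. unfold composable in *.
  destruct (Inv_rst g Hpa R) as [I1 _].
  destruct (I1 (comp G g h1, x1)) as [s [Hs Rs]].
  { left; simpl; auto. }
  destruct Hs as [[_ ->]|[Hn _]]; [|exfalso; simpl in Hn; auto].
  unfold simeq, Xbar in *; simpl in *.
  split; [|split]; [rewrite comp_dom; auto | rewrite comp_dom; auto | exact Rs].
Qed.

Lemma simeq_sym G X (act : mor G -> X -> X -> Prop) p q : simeq G act p q -> simeq G act q p.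
Proof. intros [A [B C]]; split; [|split]; auto; apply rst_sym; auto. Qed.

Lemma simeq_trans G X (act : mor G -> X -> X -> Prop) p q r :
  simeq G act p q -> simeq G act q r -> simeq G act p r.
Proof. intros [A [B C]] [_ [D E]]; split; [|split]; auto; eapply rst_trans; eauto. Qed.

Lemma simeq_refl G X (act : mor G -> X -> X -> Prop) p : Xbar G act p -> simeq G act p p.
Proof. intros; split; [|split]; auto; apply rst_refl. Qed.

Lemma simeq_ext G X (act : mor G -> X -> X -> Prop) p q :
  simeq G act p q -> simeq G act p = simeq G act q.
Proof.
  intros H; apply functional_extensionality; intro r; apply propositional_extensionality; split; intro K.
  - eapply simeq_trans; [apply simeq_sym|]; eauto.
  - eapply simeq_trans; eauto.
Qed.

Lemma Yq_eq G X (act : mor G -> X -> X -> Prop) (y1 y2 : Yq G act) :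
  proj1_sig y1 = proj1_sig y2 -> y1 = y2.
Proof.
  destruct y1 as [P1 H1], y2 as [P2 H2]; simpl; intros ->. f_equal; apply proof_irrelevance.
Qed.

Lemma Yq_rep G X (act : mor G -> X -> X -> Prop) (y : Yq G act) h x :
  proj1_sig y (h, x) -> proj1_sig y = simeq G act (h, x).
Proof.
  destruct y as [P [p [Hp ->]]]; simpl; intros H; apply simeq_ext; auto.
Qed.

Lemma Yq_Xbar G X (act : mor G -> X -> X -> Prop) (y : Yq G act) h x :
  proj1_sig y (h, x) -> Xbar G act (h, x).
Proof. destruct y as [P [p [Hp ->]]]; simpl; intros [_ [H _]]; auto. Qed.

Lemma Yq_self G X (act : mor G -> X -> X -> Prop) (y : Yq G act) :
  exists h x, proj1_sig y (h, x).
Proof. destruct y as [P [[h x] [Hp ->]]]; exists h, x; simpl; apply simeq_refl; auto. Qed.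

Lemma partA G X (act : mor G -> X -> X -> Prop) (g : mor G) (y : Yq G act) :
     pdefined G (@Yact G X act) g y <->
     exists h' x', proj1_sig y (h', x') /\ composable G g h'.
Proof.
  split.
  - intros [y' [h' [x' [A [B _]]]]]; eauto.
  - intros [h' [x' [A B]]].
    assert (Xb : Xbar G act (comp G g h', x')).
    { pose proof (Yq_Xbar y h' x' A) as K; unfold Xbar in *; simpl in *.
      rewrite comp_dom; auto. }
    exists (exist _ (simeq G act (comp G g h', x')) (ex_intro _ _ (conj Xb eq_refl))).
    exists h', x'; auto.
Qed.

Theorem proposition3p11 (G : category) (X : Type) (act : mor G -> X -> X -> Prop) :
  partial_category_action G act ->
  (* g . [h,x] is defined iff some representative (h',x') has (g,h') in G^2 *)
  (forall (g : mor G) (y : Yq G act),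
     pdefined G (@Yact G X act) g y <->
     exists h' x', proj1_sig y (h', x') /\ composable G g h') /\
  (* and the resulting partial map is well defined and a global category action *)
  global_category_action G (@Yact G X act).
Proof.
  intros Hpa. split; [apply partA|].
  split; [split; [|split; [|split; [|split]]]|].
  - intros g y y1 y2 [h1 [x1 [A1 [C1 E1]]]] [h2 [x2 [A2 [C2 E2]]]].
    apply Yq_eq; rewrite E1, E2. apply simeq_ext. apply welldef; auto.
    rewrite (Yq_rep y h1 x1 A1) in A2; auto.
  - intros y. destruct (Yq_self y) as [h [x A]]. exists (cod G h); split; [apply cod_ob|].
    apply partA. exists h, x; split; auto. unfold composable; apply ob_dom, cod_ob.
  - intros f y y' Of [h [x [A [C E]]]]. apply Yq_eq; rewrite E.
    unfold composable in C. rewrite ob_dom in C by auto. subst f. rewrite comp_id_l.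
    symmetry; apply Yq_rep; auto.
  - intros g y Hd. apply partA in Hd. apply partA. destruct Hd as [h [x [A C]]].
    exists h, x; split; auto. unfold composable in *. rewrite ob_dom by apply dom_ob. auto.
  - intros g h y y1 Cgh [h1 [x1 [A1 [C1 E1]]]]. unfold composable in *. split.
    + split; intros _.
      * apply partA. exists (comp G h h1), x1; split.
        -- rewrite E1. apply simeq_refl. pose proof (Yq_Xbar y h1 x1 A1) as K.
           unfold Xbar in *; simpl in *. rewrite comp_dom; auto.
        -- unfold composable. rewrite comp_cod; auto.
      * apply partA. exists h1, x1; split; auto. unfold composable. rewrite comp_dom; auto.
    + intros z w [k [x [Ak [Ck Ez]]]] [m [x' [Am [Cm Ew]]]].
      unfold composable in *. apply Yq_eq; rewrite Ez, Ew. apply simeq_ext.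
      rewrite comp_dom in Ck by auto.
      assert (S1 : simeq G act (k, x) (h1, x1)).
      { rewrite (Yq_rep y k x Ak) in A1; auto. }
      pose proof (welldef Hpa S1 Ck C1) as S2.
      rewrite E1 in Am.
      assert (Chh : dom G g = cod G (comp G h h1)) by (rewrite comp_cod; auto).
      assert (Chk : dom G g = cod G (comp G h k)) by (rewrite comp_cod; auto).
      pose proof (welldef Hpa S2 Chk Chh) as S3.
      pose proof (welldef Hpa Am Chh Cm) as S4.
      rewrite <- comp_assoc by auto.
      eapply simeq_trans; [exact S3|exact S4].
  - intros g y Hd. apply partA in Hd. apply partA. destruct Hd as [h [x [A C]]].
    exists h, x; split; auto. unfold composable in *. rewrite ob_dom in C by apply dom_ob. auto.
Qed.
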